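(* Let $\xi \in \Phi_{\rm BYG}$. Then $m_{\rm crit} > 2 \delta_R$.
   Context: Parameters $\xi = (\tau_L, \delta_L, \tau_R, \delta_R)$ of the map $f_\xi(x,y) = (\tau_L x + y + 1, -\delta_L x)$ for $x \le 0$ and $(\tau_R x + y + 1, -\delta_R x)$ for $x \ge 0$. Let $\Phi = \{ \xi \mid \tau_L > \delta_L + 1, \delta_L > 0, \tau_R < -(\delta_R + 1), \delta_R > 0 \}$. Let $0 < \lambda_L^s < 1 < \lambda_L^u$ be the eigenvalues of $A_L = \begin{bmatrix} \tau_L & 1 \\ -\delta_L & 0 \end{bmatrix}$. Define $\phi(\xi) = \delta_R - \left( \tau_R + \delta_L + \delta_R - (1 + \tau_R) \lambda_L^u \right) \lambda_L^u$ and $\Phi_{\rm BYG} = \{ \xi \in \Phi \mid \phi(\xi) > 0 \}$. Define $m_{\rm crit} = \lambda_L^s + \frac{2 \tau_L}{(\lambda_L^u)^2 - 1}$. *)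

(* Defs.v *)
From Stdlib Require Import Reals Lra.
Open Scope R_scope.

(* Parameter vector xi = (tauL, deltaL, tauR, deltaR). *)
Definition in_Phi (tauL deltaL tauR deltaR : R) : Prop :=
  tauL > deltaL + 1 /\ deltaL > 0 /\ tauR < - (deltaR + 1) /\ deltaR > 0.

(* Eigenvalues of A_L = [[tauL, 1], [-deltaL, 0]]: the roots of the
   characteristic polynomial l^2 - tauL l + deltaL.  On Phi the discriminant
   tauL^2 - 4 deltaL is positive and 0 < lambda_s < 1 < lambda_u. *)
Definition lamLu (tauL deltaL : R) : R :=
  (tauL + sqrt (tauL ^ 2 - 4 * deltaL)) / 2.
Definition lamLs (tauL deltaL : R) : R :=
  (tauL - sqrt (tauL ^ 2 - 4 * deltaL)) / 2.

Definition phi (tauL deltaL tauR deltaR : R) : R :=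
  let lu := lamLu tauL deltaL in
  deltaR - (tauR + deltaL + deltaR - (1 + tauR) * lu) * lu.

Definition in_Phi_BYG (tauL deltaL tauR deltaR : R) : Prop :=
  in_Phi tauL deltaL tauR deltaR /\ phi tauL deltaL tauR deltaR > 0.

Definition m_crit (tauL deltaL : R) : R :=
  lamLs tauL deltaL + 2 * tauL / ((lamLu tauL deltaL) ^ 2 - 1).

(* Main.v *)
Require Import Defs.
From Stdlib Require Import Reals.
From Stdlib Require Import Lra Psatz.
Open Scope R_scope.

Theorem lemma4p4 (tauL deltaL tauR deltaR : R) :
  in_Phi_BYG tauL deltaL tauR deltaR ->
  m_crit tauL deltaL > 2 * deltaR.
Proof.
  intros [[h1 [h2 [h3 h4]]] hp].
  unfold m_crit; unfold phi in hp.
  unfold lamLu, lamLs in *.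
  assert (HD : 0 <= tauL ^ 2 - 4 * deltaL).
  { assert (0 < (tauL-deltaL-1)*(tauL+deltaL+1)) by (apply Rmult_lt_0_compat; lra).
    pose proof (Rle_0_sqr (deltaL-1)). unfold Rsqr in *. nra. }
  set (D := tauL ^ 2 - 4 * deltaL) in *.
  set (q := sqrt D) in *.
  assert (hq0 : 0 <= q) by apply sqrt_pos.
  assert (hq2 : q * q = D) by (apply sqrt_sqrt; exact HD).
  set (u := (tauL + q) / 2) in *.
  set (s := (tauL - q) / 2) in *.
  assert (hsum : u + s = tauL) by (unfold u, s; field).
  assert (hprod : u * s = deltaL).
  { assert (u * s = (tauL^2 - q*q)/4) by (unfold u, s; field).
    rewrite H, hq2; unfold D; field. }
  assert (hu2 : 2*u = tauL + q) by (unfold u; field).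
  assert (hDe : D = tauL^2 - 4*deltaL) by reflexivity.
  clearbody u s D q.
  assert (hu : u > 1).
  { destruct (Rle_lt_dec q (2 - tauL)) as [l|l]; [|lra].
    assert (q * q <= (2 - tauL) * (2 - tauL)) by (apply Rmult_le_compat; lra).
    assert (E : (2 - tauL) * (2 - tauL) = tauL^2 - 4*tauL + 4) by ring.
    lra. }
  assert (hs : s > 0).
  { destruct (Rle_lt_dec s 0) as [l|l]; [|exact l].
    assert (u * s <= u * 0) by (apply Rmult_le_compat_l; lra). rewrite Rmult_0_r in H. lra. }
  assert (hk : deltaR * (u ^ 2 - 1) < u - s * u ^ 2).
  { rewrite <- hprod in hp.
    assert (0 < ((-(deltaR+1) - tauR)*u)*(u-1)).
    { apply Rmult_lt_0_compat; [apply Rmult_lt_0_compat|]; lra. }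
    assert (E : deltaR - (tauR + u * s + deltaR - (1 + tauR) * u) * u
               = (u-1)*(tauR*u - deltaR) + u^2 - s*u^2) by ring.
    rewrite E in hp.
    assert (E2 : ((-(deltaR+1) - tauR)*u)*(u-1) =
       - ((u-1)*(tauR*u - deltaR)) - (deltaR+1)*u*(u-1) - deltaR*(u-1)) by ring.
    rewrite E2 in H.
    assert (E3 : deltaR * (u ^ 2 - 1) = deltaR*u*(u-1) + deltaR*(u-1)) by ring.
    rewrite E3. 
    assert (E4 : (deltaR+1)*u*(u-1) = deltaR*u*(u-1) + u^2 - u) by ring.
    rewrite E4 in H. lra. }
  assert (hpos : u ^ 2 - 1 > 0).
  { assert (0 < (u-1)*(u+1)) by (apply Rmult_lt_0_compat; lra).
    assert (E : u^2 - 1 = (u-1)*(u+1)) by ring. lra. }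
  rewrite <- hsum.
  assert (hsu : 0 < s * u^2) by (apply Rmult_lt_0_compat; [lra| apply pow_lt; lra]).
  assert (E : s + 2 * (u + s) / (u ^ 2 - 1) - 2 * deltaR =
     (s * (u^2 - 1) + 2 * (u + s) - 2 * (deltaR * (u^2 - 1))) / (u^2 - 1)) by (field; lra).
  assert (0 < (s * (u^2 - 1) + 2 * (u + s) - 2 * (deltaR * (u^2 - 1))) / (u^2 - 1)).
  { apply Rdiv_lt_0_compat; [|lra].
    assert (E5 : s * (u^2 - 1) = s * u^2 - s) by ring. rewrite E5. lra. }
  lra.
Qed.
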